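(* Let $M$ be a smooth manifold of dimension $n$ and let $\dot x^i=v^i$, $\dot v^i=\Phi^i(x^1,\ldots,x^n,v^1,\ldots,v^n)$ be a Newtonian dynamical system on $M$. In each local chart define $\Gamma^k_{ij}=-\tfrac12\,\partial^2\Phi^k/\partial v^i\partial v^j$. Then $\Gamma^k_{ij}=\Gamma^k_{ji}$, and under every change of local coordinates $\tilde x=\tilde x(x)$ these functions satisfy $$\Gamma^k_{ij}=\sum_{m,a,c}S^k_mT^a_iT^c_j\tilde\Gamma^m_{ac}+\sum_mS^k_m\frac{\partial T^m_i}{\partial x^j},$$ where $S^i_j=\partial x^i/\partial\tilde x^j$, $T^i_j=\partial\tilde x^i/\partial x^j$ and $\tilde\Gamma$ is computed in the new chart at the corresponding point $(\tilde x,\tilde v)$, $\tilde v^i=\sum_jT^i_jv^j$; i.e. they are the components of a symmetric extended affine connection (in $\mathbf v$-representation) canonically associated with the system.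
   Context: A Newtonian dynamical system on $M$ is a smooth vector field on the tangent bundle $TM$ which in the induced coordinates $(x,v)$ reads $\sum_iv^i\partial/\partial x^i+\sum_i\Phi^i(x,v)\partial/\partial v^i$; equivalently, under a change of coordinates the functions $\Phi^i$ transform as $\tilde\Phi^i=\sum_jT^i_j\Phi^j+\sum_{j,k}(\partial T^i_j/\partial x^k)v^jv^k$. *)

(* Defs.v *)
From HB Require Import structures.
From mathcomp Require Import all_boot all_order all_algebra.
From mathcomp Require Import all_classical all_reals all_analysis.
Set Implicit Arguments. Unset Strict Implicit. Unset Printing Implicit Defensive.
Import Order.TTheory GRing.Theory Num.Theory.
Import numFieldNormedType.Exports.
Local Open Scope classical_set_scope.
Local Open Scope ring_scope.

(* A point of R^n is a row vector; its i-th coordinate is x ord0 i. *)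

Definition ebase {R : realType} {n : nat} (i : 'I_n) : 'rV[R]_n := delta_mx 0 i.

Fixpoint iter_derive {R : realType} {V W : normedModType R}
  (l : seq V) (f : V -> W) : V -> W :=
  match l with
  | [::] => f
  | v :: l' => fun x => 'D_v (iter_derive l' f) x
  end.

Definition smooth_on {R : realType} {V W : normedModType R}
  (A : set V) (f : V -> W) : Prop :=
  forall (l : seq V) (x : V), A x -> differentiable (iter_derive l f) x.

Definition jac {R : realType} {n : nat} (psi : 'rV[R]_n -> 'rV[R]_n)
  (x : 'rV[R]_n) : 'M[R]_n :=
  \matrix_(i, j) 'D_(ebase j) (fun y => psi y ord0 i) x.

Definition djac {R : realType} {n : nat} (psi : 'rV[R]_n -> 'rV[R]_n)
  (i j k : 'I_n) (x : 'rV[R]_n) : R :=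
  'D_(ebase k) (fun y => jac psi y i j) x.

Definition Gamma {R : realType} {n : nat}
  (Phi : 'rV[R]_n * 'rV[R]_n -> 'rV[R]_n) (k i j : 'I_n)
  (x v : 'rV[R]_n) : R :=
  - (1 / 2) * 'D_(ebase i) (fun w => 'D_(ebase j) (fun u => Phi (x, u) ord0 k) w) v.

Definition tvel {R : realType} {n : nat} (psi : 'rV[R]_n -> 'rV[R]_n)
  (x v : 'rV[R]_n) : 'rV[R]_n :=
  \row_i \sum_j jac psi x i j * v ord0 j.

(* Main.v *)
Require Import Defs.
From HB Require Import structures.
From mathcomp Require Import all_boot all_order all_algebra.
From mathcomp Require Import all_classical all_reals all_analysis.
From mathcomp Require Import ring lra.
Import Order.TTheory GRing.Theory Num.Theory.
Import numFieldNormedType.Exports.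
Local Open Scope classical_set_scope.
Local Open Scope ring_scope.
Section Aux.
Variable R : realType.

Lemma derive_line (V1 V2 W : normedModType R) (f : V1 -> W) (g : V2 -> W)
  x v x' v' :
  (forall h : R, f (h *: v + x) = g (h *: v' + x')) ->
  'D_v f x = 'D_v' g x' /\ (derivable f x v <-> derivable g x' v').
Proof.
move=> H.
have fx : f x = g x' by have := H 0; rewrite !scale0r !add0r.
rewrite /derive /derivable.
have -> : (fun h : R => h^-1 *: ((f \o shift x) (h *: v) - f x)) =
          (fun h : R => h^-1 *: ((g \o shift x') (h *: v') - g x')).
  by apply/funext => h /=; rewrite H fx.
by [].
Qed.

Lemma derive_coord (X : normedModType R) m (F : X -> 'rV[R]_m) y v k :
  derivable F y v -> 'D_v (fun p => F p ord0 k) y = 'D_v F y ord0 k.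
Proof. by move=> dF; rewrite derive_mx // mxE. Qed.

Lemma derivable_coord (X : normedModType R) m (F : X -> 'rV[R]_m) y v k :
  derivable F y v -> derivable (fun p => F p ord0 k) y v.
Proof. by move/derivable_mxP; apply. Qed.

Lemma is_derive_line (X : normedModType R) (G : X -> R) a y s0 :
  derivable G (s0 *: a + y) a ->
  is_derive s0 (1:R) (fun s : R => G (s *: a + y)) ('D_a G (s0 *: a + y)).
Proof.
move=> dG.
have H : forall h : R, (fun s : R => G (s *: a + y)) (h *: (1:R^o) + s0) = G (h *: a + (s0 *: a + y)).
  by move=> h /=; rewrite -[h *: 1]/(h * 1) mulr1 scalerDl addrA.
have [E1 E2] := @derive_line R^o X R (fun s : R => G (s *: a + y)) G s0 1 (s0 *: a + y) a H.
by apply: DeriveDef; [apply/E2 | rewrite E1].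
Qed.

Lemma norm_coord m (M : 'rV[R]_m) k : `|M ord0 k| <= `|M|.
Proof.
rewrite [leRHS]/Num.Def.normr /= mx_normrE.
exact: (le_bigmax _ _ (ord0, k)).
Qed.

Lemma coordB m (A B : 'rV[R]_m) k : (A - B) ord0 k = A ord0 k - B ord0 k.
Proof. by rewrite !mxE. Qed.

Lemma absurd_close (P Q u v : R) : u = v ->
  `|P - u| < `|P - Q| / 2 -> `|Q - v| < `|P - Q| / 2 -> False.
Proof.
move=> <- D1 D2.
have T : `|P - Q| <= `|P - u| + `|Q - u|.
  have -> : P - Q = (P - u) - (Q - u) by ring.
  exact: ler_normB.
lra.
Qed.

End Aux.
Arguments derive_line {R V1 V2 W f g x v x' v'}.
Arguments derive_coord {R X m F y v k}.
Arguments derivable_coord {R X m F y v k}.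

Section Schwarz.
Variable R : realType.

Lemma line_coord (X : normedModType R) m (G : X -> 'rV[R]_m) (c y : X) k s :
  differentiable G (s *: c + y) ->
  is_derive s (1:R) (fun s : R => G (s *: c + y) ord0 k) ('D_c G (s *: c + y) ord0 k).
Proof.
move=> dG; rewrite -derive_coord; last exact: diff_derivable.
apply: (@is_derive_line R X (fun p => G p ord0 k)).
exact/derivable_coord/diff_derivable.
Qed.

Lemma mvt2 (X : normedModType R) m (F : X -> 'rV[R]_m) (x a b : X) k d :
  (forall y, ball x d y -> [/\ differentiable F y, differentiable ('D_a F) y
      & differentiable ('D_b ('D_a F)) y]) ->
  forall h : R, 0 < h -> h * (`|a| + `|b|) < d ->
  exists s t : R, [/\ 0 < s < h, 0 < t < h &
    F (h *: a + (h *: b + x)) ord0 k - F (h *: a + x) ord0 k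
      - F (h *: b + x) ord0 k + F x ord0 k
      = h * h * 'D_b ('D_a F) (t *: b + (s *: a + x)) ord0 k].
Proof.
move=> Hd h h0 hd.
have inb : forall s t, 0 <= s <= h -> 0 <= t <= h -> ball x d (s *: a + (t *: b + x)).
  move=> s t /andP[s0 sh] /andP[t0 th]; rewrite -ball_normE /=.
  rewrite addrA opprD addrCA subrr addr0 normrN.
  apply: le_lt_trans (ler_normD _ _) _; rewrite !normrZ !ger0_norm //.
  apply: le_lt_trans hd; rewrite mulrDr.
  by apply: lerD; apply: ler_wpM2r.
have hh : 0 <= h <= h by apply/andP; split; [exact: ltW | exact: lexx].
have h00 : (0:R) <= 0 <= h by apply/andP; split; [exact: lexx | exact: ltW].
pose phi := fun s : R => F (s *: a + (h *: b + x)) ord0 k - F (s *: a + (0 *: b + x)) ord0 k.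
pose dphi := fun s : R => 'D_a F (s *: a + (h *: b + x)) ord0 k - 'D_a F (s *: a + (0 *: b + x)) ord0 k.
have Dphi : forall s, 0 <= s <= h -> is_derive s 1 phi (dphi s).
  move=> s hs.
  have [dF1 _ _] := Hd _ (inb s h hs hh).
  have [dF2 _ _] := Hd _ (inb s 0 hs h00).
  have := is_deriveB (line_coord _ _ _ _ _ k _ dF1) (line_coord _ _ _ _ _ k _ dF2).
  exact.
have [s sI Hs] : exists2 s, s \in `]0, h[ & phi h - phi 0 = dphi s * (h - 0).
  apply: MVT => //.
    move=> s; rewrite in_itv /= => /andP[s1 s2]; apply: Dphi.
    by rewrite !ltW.
  apply: continuous_in_subspaceT => s.
  rewrite inE /= in_itv /= => hs.
  have [dd _] := Dphi s hs.
  by apply: differentiable_continuous; apply/derivable1_diffP.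
move: sI; rewrite in_itv /= => /andP[s1 s2].
have hs : 0 <= s <= h by rewrite !ltW.
pose psi := fun t : R => 'D_a F (t *: b + (s *: a + x)) ord0 k.
pose dpsi := fun t : R => 'D_b ('D_a F) (t *: b + (s *: a + x)) ord0 k.
have Dpsi : forall t, 0 <= t <= h -> is_derive t 1 psi (dpsi t).
  move=> t ht.
  have [_ dDa _] := Hd _ (inb s t hs ht).
  rewrite addrCA in dDa.
  exact: (line_coord _ _ ('D_a F) b (s *: a + x) k t dDa).
have [t tI Ht] : exists2 t, t \in `]0, h[ & psi h - psi 0 = dpsi t * (h - 0).
  apply: MVT => //.
    move=> t; rewrite in_itv /= => /andP[t1 t2]; apply: Dpsi.
    by rewrite !ltW.
  apply: continuous_in_subspaceT => t.
  rewrite inE /= in_itv /= => ht.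
  have [dd _] := Dpsi t ht.
  by apply: differentiable_continuous; apply/derivable1_diffP.
move: tI; rewrite in_itv /= => /andP[t1 t2].
exists s, t; split; [by rewrite s1 | by rewrite t1 |].
have E1 : phi h - phi 0 = F (h *: a + (h *: b + x)) ord0 k - F (h *: a + x) ord0 k
      - F (h *: b + x) ord0 k + F x ord0 k.
  rewrite /phi !scale0r !add0r; ring.
have E2 : dphi s = psi h - psi 0.
  by rewrite /dphi /psi !scale0r !add0r addrCA.
rewrite -E1 Hs E2 Ht /dpsi subr0; ring.
Qed.
End Schwarz.
Section Schwarz2.
Variable R : realType.

Lemma inb_lemma (X : normedModType R) (x u v : X) (d h s t : R) :
  h * (`|u| + `|v|) < d -> 0 <= s <= h -> 0 <= t <= h ->
  ball x d (s *: u + (t *: v + x)).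
Proof.
move=> hd /andP[s0 sh] /andP[t0 th]; rewrite -ball_normE /=.
rewrite addrA opprD addrCA subrr addr0 normrN.
apply: le_lt_trans (ler_normD _ _) _; rewrite !normrZ !ger0_norm //.
apply: le_lt_trans hd; rewrite mulrDr.
by apply: lerD; apply: ler_wpM2r.
Qed.

Lemma schwarz (X : normedModType R) m (F : X -> 'rV[R]_m) (x a b : X) :
  (\forall y \near x, [/\ differentiable F y, differentiable ('D_a F) y,
     differentiable ('D_b F) y, differentiable ('D_b ('D_a F)) y
     & differentiable ('D_a ('D_b F)) y]) ->
  'D_b ('D_a F) x = 'D_a ('D_b F) x.
Proof.
move=> Hn.
have [H1 H2 H3 H4 H5] := nbhs_singleton Hn.
apply/rowP => k.
pose P := 'D_b ('D_a F) x 0 k; pose Q := 'D_a ('D_b F) x 0 k.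
change (P = Q).
have [//|neq] := eqVneq P Q.
pose e := `|P - Q| / 2.
have e0 : 0 < e by rewrite divr_gt0 // normr_gt0 subr_eq0.
have c1 := differentiable_continuous H4.
have c2 := differentiable_continuous H5.
move/cvgrPdist_lt: c1 => /(_ e e0) c1.
move/cvgrPdist_lt: c2 => /(_ e e0) c2.
have Hall := @filterI _ (nbhs x) (nbhs_filter x) _ _ Hn (@filterI _ (nbhs x) (nbhs_filter x) _ _ c1 c2).
have := (nbhs_ballP x _).1 Hall.
case=> d d0 Hd.
pose c := `|a| + `|b|.
have c0 : 0 <= c by rewrite addr_ge0.
pose h := d / (2 * (c + 1)).
have h0 : 0 < h by rewrite divr_gt0 // mulr_gt0 // ltr_pwDr.
have hd : h * c < d.
  rewrite /h mulrAC ltr_pdivrMr; last by rewrite mulr_gt0 // ltr_pwDr.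
  by rewrite ltr_pM2l //; lra.
have hd' : h * (`|b| + `|a|) < d by rewrite addrC.
have [s1 [t1 [/andP[s10 s1h] /andP[t10 t1h] E1]]] :=
  @mvt2 R X m F x a b k d (fun y yb => let: conj (And5 f1 f2 f3 f4 f5) _ := Hd y yb in And3 f1 f2 f4) h h0 hd.
have [s2 [t2 [/andP[s20 s2h] /andP[t20 t2h] E2]]] :=
  @mvt2 R X m F x b a k d (fun y yb => let: conj (And5 f1 f2 f3 f4 f5) _ := Hd y yb in And3 f1 f3 f5) h h0 hd'.
have E : 'D_b ('D_a F) (t1 *: b + (s1 *: a + x)) 0 k = 'D_a ('D_b F) (t2 *: a + (s2 *: b + x)) 0 k.
  have hh : h * h != 0 by rewrite mulf_neq0 // gt_eqF.
  apply: (mulfI hh); apply: (etrans (esym E1)); apply: (etrans _ E2).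
  rewrite [h *: b + (h *: a + x)]addrCA; ring.
have b1 : ball x d (t1 *: b + (s1 *: a + x)).
  by apply: (inb_lemma _ _ _ _ _ _ _ _ hd'); apply/andP; split; apply: ltW.
have b2 : ball x d (t2 *: a + (s2 *: b + x)).
  by apply: (inb_lemma _ _ _ _ _ _ _ _ hd); apply/andP; split; apply: ltW.
have [_ [C1 _]] := Hd _ b1.
have [_ [_ C2]] := Hd _ b2.
have D1 : `|P - 'D_b ('D_a F) (t1 *: b + (s1 *: a + x)) 0 k| < e.
  by have := le_lt_trans (norm_coord _ _ _ k) C1; rewrite coordB.
have D2 : `|Q - 'D_a ('D_b F) (t2 *: a + (s2 *: b + x)) 0 k| < e.
  by have := le_lt_trans (norm_coord _ _ _ k) C2; rewrite coordB.
exfalso; exact: (absurd_close _ _ _ _ _ E D1 D2).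
Qed.
End Schwarz2.
Section Gen.
Variable R : realType.

Lemma derive_sumf (X : normedModType R) k (h : 'I_k -> X -> R) x v :
  (forall c, derivable (h c) x v) ->
  'D_v (fun w => \sum_c h c w) x = \sum_c 'D_v (h c) x /\
  derivable (fun w => \sum_c h c w) x v.
Proof.
move=> dh.
have -> : (fun w => \sum_c h c w) = \sum_c h c by rewrite fct_sumE.
by split; [apply: derive_sum | apply: derivable_sum].
Qed.

Lemma deriveZr (X : normedModType R) (g : X -> R) (a : R) x v :
  derivable g x v ->
  'D_v (fun w => a * g w) x = a * 'D_v g x /\ derivable (fun w => a * g w) x v.
Proof.
move=> dg.
have -> : (fun w => a * g w) = a \*: g by [].
by split; [apply: deriveZ | apply: derivableZ].
Qed.

Lemma deriveMf (X : normedModType R) (f g : X -> R) x v :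
  derivable f x v -> derivable g x v ->
  'D_v (fun w => f w * g w) x = f x * 'D_v g x + g x * 'D_v f x /\
  derivable (fun w => f w * g w) x v.
Proof.
move=> df dg.
have -> : (fun w => f w * g w) = f * g by [].
by split; [apply: deriveM | apply: derivableM].
Qed.

Lemma deriveDf (X : normedModType R) (f g : X -> R) x v :
  derivable f x v -> derivable g x v ->
  'D_v (fun w => f w + g w) x = 'D_v f x + 'D_v g x /\
  derivable (fun w => f w + g w) x v.
Proof.
move=> df dg.
have -> : (fun w => f w + g w) = f + g by [].
by split; [apply: deriveD | apply: derivableD].
Qed.

Lemma derive_cstf (X : normedModType R) (c : R) x v :
  'D_v (fun _ : X => c) x = 0 /\ derivable (fun _ : X => c) x v.
Proof. by split; [apply: derive_cst | apply: derivable_cst]. Qed.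

Lemma derive_rcoord n (a : 'I_n) (x v : 'rV[R]_n) :
  'D_v (fun w : 'rV[R]_n => w ord0 a) x = v ord0 a /\
  derivable (fun w : 'rV[R]_n => w ord0 a) x v.
Proof.
have di : derivable (fun w : 'rV[R]_n => w) x v by exact: derivable_id.
have := @derivable_coord R 'rV[R]_n n (fun w => w) x v a di.
have := @derive_coord R 'rV[R]_n n (fun w => w) x v a di.
move=> -> dd; split => //.
have -> : 'D_v (fun w : 'rV[R]_n => w) x = v by exact: derive_id.
by [].
Qed.

End Gen.
Section Chain.
Variables (R : realType) (n : nat).

Lemma ebaseE (j a : 'I_n) : (ebase j : 'rV[R]_n) ord0 a = (a == j)%:R.
Proof. by rewrite /ebase mxE eqxx. Qed.

Lemma sum_kron (f : 'I_n -> R) j : \sum_a (a == j)%:R * f a = f j.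
Proof.
rewrite (bigD1 j) //= eqxx mul1r big1 ?addr0 // => a /negbTE ->.
by rewrite mul0r.
Qed.

Lemma sum_kron' (f : 'I_n -> R) j : \sum_a f a * (a == j)%:R = f j.
Proof. by rewrite -[RHS]sum_kron; apply: eq_bigr => a _; rewrite mulrC. Qed.

Lemma pair_sumr (r : 'rV[R]_n) :
  ((0 : 'rV[R]_n), r) = \sum_c r ord0 c *: ((0 : 'rV[R]_n), (ebase c : 'rV[R]_n)).
Proof.
have f1 : forall (F : 'I_n -> ('rV[R]_n * 'rV[R]_n)%type), (\sum_c F c).1 = \sum_c (F c).1.
  by move=> F; apply: big_morph.
have f2 : forall (F : 'I_n -> ('rV[R]_n * 'rV[R]_n)%type), (\sum_c F c).2 = \sum_c (F c).2.
  by move=> F; apply: big_morph.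
rewrite [RHS]surjective_pairing f1 f2 /=.
congr pair.
  by rewrite big1 // => c _; rewrite scaler0.
exact: row_sum_delta.
Qed.

Lemma pairE (h : R) (a b c d : 'rV[R]_n) :
  h *: (a, b) + (c, d) = (h *: a + c, h *: b + d).
Proof. by []. Qed.

Lemma Lin (G : ('rV[R]_n * 'rV[R]_n)%type -> 'rV[R]_n) q (r : 'rV[R]_n) m :
  differentiable G q ->
  'D_((0 : 'rV[R]_n), r) G q ord0 m
    = \sum_c r ord0 c * 'D_((0 : 'rV[R]_n), (ebase c : 'rV[R]_n)) G q ord0 m.
Proof.
move=> dG.
rewrite deriveE // pair_sumr linear_sum summxE.
apply: eq_bigr => c _.
by rewrite linearZ deriveE // mxE.
Qed.

Lemma ChainA (G : ('rV[R]_n * 'rV[R]_n)%type -> 'rV[R]_n) (y0 : 'rV[R]_n)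
  (ell : 'rV[R]_n -> 'rV[R]_n)
  (Hl : forall (h : R) e w, ell (h *: e + w) = h *: ell e + ell w) m j w :
  differentiable G (y0, ell w) ->
  'D_(ebase j : 'rV[R]_n) (fun w => G (y0, ell w) ord0 m) w
    = \sum_c ell (ebase j) ord0 c * 'D_((0 : 'rV[R]_n), (ebase c : 'rV[R]_n)) G (y0, ell w) ord0 m
  /\ derivable (fun w => G (y0, ell w) ord0 m) w (ebase j).
Proof.
move=> dG.
have H : forall h : R, (fun w => G (y0, ell w) ord0 m) (h *: (ebase j : 'rV[R]_n) + w)
   = (fun p => G p ord0 m) (h *: ((0 : 'rV[R]_n), ell (ebase j)) + (y0, ell w)).
  by move=> h /=; rewrite Hl pairE scaler0 add0r.
have [E1 E2] := @derive_line R 'rV[R]_n ('rV[R]_n * 'rV[R]_n)%type R^o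
  (fun w => G (y0, ell w) ord0 m) (fun p => G p ord0 m) w (ebase j) (y0, ell w)
  ((0 : 'rV[R]_n), ell (ebase j)) H.
have dd : derivable G (y0, ell w) ((0 : 'rV[R]_n), ell (ebase j)) by exact: diff_derivable.
split; last by apply/E2; exact: derivable_coord.
by rewrite E1 derive_coord // Lin.
Qed.

End Chain.
Section Main1.
Variables (R : realType) (n : nat).

Lemma ChainI (G : ('rV[R]_n * 'rV[R]_n)%type -> 'rV[R]_n) (y0 w : 'rV[R]_n) m j :
  differentiable G (y0, w) ->
  'D_(ebase j : 'rV[R]_n) (fun u => G (y0, u) ord0 m) w
    = 'D_((0 : 'rV[R]_n), (ebase j : 'rV[R]_n)) G (y0, w) ord0 m
  /\ derivable (fun u => G (y0, u) ord0 m) w (ebase j).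
Proof.
move=> dG.
have Hl : forall (h : R) (e w : 'rV[R]_n), (fun u => u) (h *: e + w) = h *: (fun u => u) e + (fun u => u) w by [].
move: (@ChainA R n G y0 (fun u => u) Hl m j w dG) => /= [E D].
split => //; rewrite E.
by under eq_bigr do rewrite ebaseE; rewrite sum_kron.
Qed.

Lemma smooth0 (V W : normedModType R) (A : set V) (f : V -> W) y :
  smooth_on A f -> A y -> differentiable f y.
Proof. by move=> Hs Ay; exact: (Hs [::] y Ay). Qed.

Lemma smooth1 (V W : normedModType R) (A : set V) (f : V -> W) y c :
  smooth_on A f -> A y -> differentiable ('D_c f) y.
Proof. by move=> Hs Ay; exact: (Hs [:: c] y Ay). Qed.

Lemma smooth2 (V W : normedModType R) (A : set V) (f : V -> W) y c c' :
  smooth_on A f -> A y -> differentiable ('D_c' ('D_c f)) y.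
Proof. by move=> Hs Ay; exact: (Hs [:: c'; c] y Ay). Qed.

Lemma Gamma_eq (U : set 'rV[R]_n) (Phi : ('rV[R]_n * 'rV[R]_n)%type -> 'rV[R]_n) x v k i j :
  smooth_on (U `*` setT) Phi -> U x ->
  Gamma Phi k i j x v = - (1 / 2) *
    'D_((0 : 'rV[R]_n), (ebase i : 'rV[R]_n)) ('D_((0 : 'rV[R]_n), (ebase j : 'rV[R]_n)) Phi) (x, v) ord0 k.
Proof.
move=> Hs Ux; rewrite /Gamma.
have -> : (fun w => 'D_(ebase j : 'rV[R]_n) (fun u => Phi (x, u) ord0 k) w)
    = (fun w => 'D_((0 : 'rV[R]_n), (ebase j : 'rV[R]_n)) Phi (x, w) ord0 k).
  apply/funext => w.
  have dP : differentiable Phi (x, w) by apply: (smooth0 _ _ _ _ _ Hs).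
  have [E _] := @ChainI Phi x w k j dP.
  exact: E.
have dP : differentiable ('D_((0 : 'rV[R]_n), (ebase j : 'rV[R]_n)) Phi) (x, v).
  by apply: (smooth1 _ _ _ _ _ _ Hs).
have [E _] := @ChainI (fun p => 'D_((0 : 'rV[R]_n), (ebase j : 'rV[R]_n)) Phi p) x v k i dP.
by rewrite E.
Qed.

Lemma nbhsUT (U : set 'rV[R]_n) (x v : 'rV[R]_n) : open U -> U x ->
  nbhs (x, v) (U `*` setT).
Proof.
move=> oU Ux.
exists (U, setT) => //=; split => //=.
  by apply: open_nbhs_nbhs; split.
exact: filterT.
Qed.

Lemma Gamma_sym (U : set 'rV[R]_n) (Phi : ('rV[R]_n * 'rV[R]_n)%type -> 'rV[R]_n) x v k i j :
  open U -> smooth_on (U `*` setT) Phi -> U x ->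
  Gamma Phi k i j x v = Gamma Phi k j i x v.
Proof.
move=> oU Hs Ux.
have E1 := Gamma_eq _ Phi x v k i j Hs Ux.
have E2 := Gamma_eq _ Phi x v k j i Hs Ux.
apply: (etrans E1); apply: esym; apply: (etrans E2).
have S : 'D_((0 : 'rV[R]_n), (ebase i : 'rV[R]_n)) ('D_((0 : 'rV[R]_n), (ebase j : 'rV[R]_n)) Phi) (x, v)
   = 'D_((0 : 'rV[R]_n), (ebase j : 'rV[R]_n)) ('D_((0 : 'rV[R]_n), (ebase i : 'rV[R]_n)) Phi) (x, v).
  apply: (@schwarz R ('rV[R]_n * 'rV[R]_n)%type n Phi (x, v) ((0 : 'rV[R]_n), (ebase j : 'rV[R]_n)) ((0 : 'rV[R]_n), (ebase i : 'rV[R]_n))).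
  apply: filterS (nbhsUT _ _ v oU Ux) => y Ay.
  split; [exact: (smooth0 _ _ _ _ _ Hs Ay) | exact: (smooth1 _ _ _ _ _ _ Hs Ay)
    | exact: (smooth1 _ _ _ _ _ _ Hs Ay)
    | exact: (smooth2 _ _ _ _ _ _ _ Hs Ay) | exact: (smooth2 _ _ _ _ _ _ _ Hs Ay)].
apply: (congr1 (fun M : 'rV[R]_n => - (1 / 2) * M ord0 k)).
exact: (esym S).
Qed.

End Main1.
Section Main2.
Variables (R : realType) (n : nat).

Lemma jacE (U : set 'rV[R]_n) (psi : 'rV[R]_n -> 'rV[R]_n) y i j :
  smooth_on U psi -> U y -> jac psi y i j = 'D_(ebase j : 'rV[R]_n) psi y ord0 i.
Proof.
move=> Hs Uy; rewrite /jac mxE.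
have dd : derivable psi y (ebase j : 'rV[R]_n).
  by apply: diff_derivable; exact: (smooth0 _ _ _ _ _ _ Hs Uy).
exact: (derive_coord dd).
Qed.

Lemma djacE (U : set 'rV[R]_n) (psi : 'rV[R]_n -> 'rV[R]_n) x m i j :
  open U -> smooth_on U psi -> U x ->
  djac psi m i j x = 'D_(ebase j : 'rV[R]_n) ('D_(ebase i : 'rV[R]_n) psi) x ord0 m.
Proof.
move=> oU Hs Ux; rewrite /djac.
have N : \forall y \near x, jac psi y m i = 'D_(ebase i : 'rV[R]_n) psi y ord0 m.
  apply: filterS (open_nbhs_nbhs (conj oU Ux)) => y Uy.
  exact: (jacE _ _ _ _ _ Hs Uy).
rewrite (@near_eq_derive R _ _ (fun y => jac psi y m i)
   (fun y => 'D_(ebase i : 'rV[R]_n) psi y ord0 m) x (ebase j) N).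
have dd : derivable ('D_(ebase i : 'rV[R]_n) psi) x (ebase j : 'rV[R]_n).
  by apply: diff_derivable; exact: (smooth1 _ _ _ _ _ _ _ Hs Ux).
exact: (derive_coord dd).
Qed.

Lemma djac_sym (U : set 'rV[R]_n) (psi : 'rV[R]_n -> 'rV[R]_n) x m i j :
  open U -> smooth_on U psi -> U x ->
  djac psi m i j x = djac psi m j i x.
Proof.
move=> oU Hs Ux.
have E1 := djacE _ _ x m i j oU Hs Ux.
have E2 := djacE _ _ x m j i oU Hs Ux.
apply: (etrans E1); apply: esym; apply: (etrans E2).
have S : 'D_(ebase i : 'rV[R]_n) ('D_(ebase j : 'rV[R]_n) psi) x
   = 'D_(ebase j : 'rV[R]_n) ('D_(ebase i : 'rV[R]_n) psi) x.
  apply: (@schwarz R 'rV[R]_n n psi x (ebase j) (ebase i)).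
  apply: filterS (open_nbhs_nbhs (conj oU Ux)) => y Ay.
  split; [exact: (smooth0 _ _ _ _ _ _ Hs Ay) | exact: (smooth1 _ _ _ _ _ _ _ Hs Ay)
    | exact: (smooth1 _ _ _ _ _ _ _ Hs Ay)
    | exact: (smooth2 _ _ _ _ _ _ _ _ Hs Ay) | exact: (smooth2 _ _ _ _ _ _ _ _ Hs Ay)].
apply: (congr1 (fun M : 'rV[R]_n => M ord0 m)).
exact: S.
Qed.

End Main2.
Section Main3.
Variables (R : realType) (n : nat).

Lemma coordZ (a : R) (A : 'rV[R]_n) k : (a *: A) ord0 k = a * A ord0 k.
Proof. by rewrite mxE. Qed.

Lemma ST (U V : set 'rV[R]_n) (psi phi : 'rV[R]_n -> 'rV[R]_n) x k l :
  open U -> (forall x, U x -> V (psi x)) -> (forall x, U x -> phi (psi x) = x) ->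
  smooth_on U psi -> smooth_on V phi -> U x ->
  \sum_m jac phi (psi x) k m * jac psi x m l = (k == l)%:R.
Proof.
move=> oU HUV Hpp Hpsi Hphi Ux.
have Vpx := HUV x Ux.
have dpsi : differentiable psi x := smooth0 _ _ _ _ _ _ Hpsi Ux.
have dphi : differentiable phi (psi x) := smooth0 _ _ _ _ _ _ Hphi Vpx.
have E1 : 'D_(ebase l : 'rV[R]_n) (phi \o psi) x = ebase l.
  have N : \forall y \near x, (phi \o psi) y = (fun y => y) y.
    by apply: filterS (open_nbhs_nbhs (conj oU Ux)) => y Uy; exact: Hpp.
  rewrite (near_eq_derive _ N).
  exact: derive_id.
have E2 : 'D_(ebase l : 'rV[R]_n) (phi \o psi) x
    = 'd phi (psi x) ('D_(ebase l : 'rV[R]_n) psi x).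
  have dc := differentiable_comp dpsi dphi.
  have A := deriveE (ebase l : 'rV[R]_n) dc.
  have B := diff_comp dpsi dphi.
  have C := deriveE (ebase l : 'rV[R]_n) dpsi.
  apply: (etrans A); rewrite C.
  exact: (congr1 (fun f => f (ebase l : 'rV[R]_n)) B).
have E3 : ('D_(ebase l : 'rV[R]_n) psi x : 'rV[R]_n)
    = \sum_m jac psi x m l *: (ebase m : 'rV[R]_n).
  rewrite [LHS]row_sum_delta; apply: eq_bigr => m _.
  by rewrite (jacE _ _ _ _ _ _ _ Hpsi Ux).
have E4 : forall m, 'd phi (psi x) (ebase m : 'rV[R]_n) ord0 k = jac phi (psi x) k m.
  by move=> m; rewrite -(deriveE _ dphi) (jacE _ _ _ _ _ _ _ Hphi Vpx).
have G1 : (ebase l : 'rV[R]_n) = 'd phi (psi x) (\sum_m jac psi x m l *: (ebase m : 'rV[R]_n)).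
  by rewrite -E3 -E2 E1.
have G2 : 'd phi (psi x) (\sum_m jac psi x m l *: (ebase m : 'rV[R]_n))
    = \sum_m jac psi x m l *: 'd phi (psi x) (ebase m : 'rV[R]_n).
  rewrite linear_sum; apply: eq_bigr => m _; exact: linearZ.
have G3 := congr1 (fun M : 'rV[R]_n => M ord0 k) (etrans G1 G2).
simpl in G3.
rewrite (ebaseE R n l k) summxE in G3.
rewrite G3; apply: eq_bigr => m _.
by rewrite coordZ E4 mulrC.
Qed.

End Main3.
Section Main4.
Variables (R : realType) (n : nat).

Lemma rowlin (T : 'M[R]_n) (h : R) (e w : 'rV[R]_n) :
  (\row_i \sum_j T i j * (h *: e + w) ord0 j : 'rV[R]_n)
  = h *: (\row_i \sum_j T i j * e ord0 j) + \row_i \sum_j T i j * w ord0 j.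
Proof.
apply/rowP => a; rewrite !mxE mulr_sumr -big_split; apply: eq_bigr => j _.
by rewrite !mxE mulrDr mulrCA.
Qed.

Lemma rowe (T : 'M[R]_n) j c :
  (\row_i \sum_j' T i j' * (ebase j : 'rV[R]_n) ord0 j' : 'rV[R]_n) ord0 c = T c j.
Proof.
rewrite mxE; under eq_bigr do rewrite ebaseE.
exact: sum_kron'.
Qed.

Lemma tvel_lin (psi : 'rV[R]_n -> 'rV[R]_n) x (h : R) e w :
  tvel psi x (h *: e + w) = h *: tvel psi x e + tvel psi x w.
Proof. exact: rowlin. Qed.

Lemma tvel_e (psi : 'rV[R]_n -> 'rV[R]_n) x j c :
  tvel psi x (ebase j) ord0 c = jac psi x c j.
Proof. exact: rowe. Qed.

Lemma LHS2 (V : set 'rV[R]_n) (psi : 'rV[R]_n -> 'rV[R]_n)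
  (tPhi : ('rV[R]_n * 'rV[R]_n)%type -> 'rV[R]_n) x v m i j :
  smooth_on (V `*` setT) tPhi -> V (psi x) ->
  'D_(ebase i : 'rV[R]_n) (fun w => 'D_(ebase j : 'rV[R]_n)
        (fun u => tPhi (psi x, tvel psi x u) ord0 m) w) v
  = \sum_c jac psi x c j * \sum_a jac psi x a i *
      'D_((0 : 'rV[R]_n), (ebase a : 'rV[R]_n))
        ('D_((0 : 'rV[R]_n), (ebase c : 'rV[R]_n)) tPhi) (psi x, tvel psi x v) ord0 m.
Proof.
move=> Hs Vx.
have dT : forall w, differentiable tPhi (psi x, tvel psi x w).
  by move=> w; apply: (smooth0 _ _ _ _ _ _ Hs).
have D1 : (fun w => 'D_(ebase j : 'rV[R]_n) (fun u => tPhi (psi x, tvel psi x u) ord0 m) w)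
   = (fun w => \sum_c jac psi x c j *
        'D_((0 : 'rV[R]_n), (ebase c : 'rV[R]_n)) tPhi (psi x, tvel psi x w) ord0 m).
  apply/funext => w.
  have [E _] := @ChainA R n tPhi (psi x) (tvel psi x) (tvel_lin psi x) m j w (dT w).
  apply: (etrans E); apply: eq_bigr => c _.
  by rewrite tvel_e.
rewrite D1.
have Dc : forall c,
   'D_(ebase i : 'rV[R]_n) (fun w => 'D_((0 : 'rV[R]_n), (ebase c : 'rV[R]_n)) tPhi (psi x, tvel psi x w) ord0 m) v
     = \sum_a jac psi x a i * 'D_((0 : 'rV[R]_n), (ebase a : 'rV[R]_n))
        ('D_((0 : 'rV[R]_n), (ebase c : 'rV[R]_n)) tPhi) (psi x, tvel psi x v) ord0 m
   /\ derivable (fun w => 'D_((0 : 'rV[R]_n), (ebase c : 'rV[R]_n)) tPhi (psi x, tvel psi x w) ord0 m) v (ebase i).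
  move=> c.
  have dc : differentiable ('D_((0 : 'rV[R]_n), (ebase c : 'rV[R]_n)) tPhi) (psi x, tvel psi x v).
    by apply: (smooth1 _ _ _ _ _ _ _ Hs).
  move: (@ChainA R n ('D_((0 : 'rV[R]_n), (ebase c : 'rV[R]_n)) tPhi) (psi x) (tvel psi x)
     (tvel_lin psi x) m i v dc) => /= [E D].
  split => //; apply: (etrans E); apply: eq_bigr => a _.
  by rewrite tvel_e.
have Zc : forall c,
   'D_(ebase i : 'rV[R]_n) (fun w => jac psi x c j * 'D_((0 : 'rV[R]_n), (ebase c : 'rV[R]_n)) tPhi (psi x, tvel psi x w) ord0 m) v
     = jac psi x c j * \sum_a jac psi x a i * 'D_((0 : 'rV[R]_n), (ebase a : 'rV[R]_n))
        ('D_((0 : 'rV[R]_n), (ebase c : 'rV[R]_n)) tPhi) (psi x, tvel psi x v) ord0 m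
   /\ derivable (fun w => jac psi x c j * 'D_((0 : 'rV[R]_n), (ebase c : 'rV[R]_n)) tPhi (psi x, tvel psi x w) ord0 m) v (ebase i).
  move=> c; have [E D] := Dc c.
  have [Z1 Z2] := @deriveZr R 'rV[R]_n _ (jac psi x c j) v (ebase i) D.
  by split => //; rewrite Z1 E.
have [S _] := @derive_sumf R 'rV[R]_n n
  (fun c w => jac psi x c j * 'D_((0 : 'rV[R]_n), (ebase c : 'rV[R]_n)) tPhi (psi x, tvel psi x w) ord0 m)
  v (ebase i) (fun c => (Zc c).2).
apply: (etrans S); apply: eq_bigr => c _.
exact: (Zc c).1.
Qed.

End Main4.
Section Main5.
Variables (R : realType) (n : nat).
Local Notation rV := ('rV[R]_n).

Lemma linP (G : (rV * rV)%type -> rV) (x0 w : rV) (t : 'I_n -> R) j :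
  differentiable G (x0, w) ->
  'D_(ebase j : rV) (fun u => \sum_l t l * G (x0, u) ord0 l) w
    = \sum_l t l * 'D_((0 : rV), (ebase j : rV)) G (x0, w) ord0 l
  /\ derivable (fun u => \sum_l t l * G (x0, u) ord0 l) w (ebase j).
Proof.
move=> dG.
have Zl : forall l,
  'D_(ebase j : rV) (fun u => t l * G (x0, u) ord0 l) w
    = t l * 'D_((0 : rV), (ebase j : rV)) G (x0, w) ord0 l
  /\ derivable (fun u => t l * G (x0, u) ord0 l) w (ebase j).
  move=> l; have [E D] := @ChainI R n G x0 w l j dG.
  have [Z1 Z2] := @deriveZr R rV _ (t l) w (ebase j) D.
  by split => //; rewrite Z1 E.
have [S S2] := @derive_sumf R rV n (fun l u => t l * G (x0, u) ord0 l) w (ebase j)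
   (fun l => (Zl l).2).
split => //; apply: (etrans S); apply: eq_bigr => l _; exact: (Zl l).1.
Qed.

Lemma quad1 (D : 'I_n -> 'I_n -> R) j (w : rV) :
  'D_(ebase j : rV) (fun u : rV => \sum_a \sum_b D a b * u ord0 a * u ord0 b) w
   = \sum_a \sum_b (D a b * w ord0 a * (b == j)%:R + w ord0 b * (D a b * (a == j)%:R))
  /\ derivable (fun u : rV => \sum_a \sum_b D a b * u ord0 a * u ord0 b) w (ebase j).
Proof.
have T1 : forall a b,
  'D_(ebase j : rV) (fun u : rV => D a b * u ord0 a * u ord0 b) w
    = D a b * w ord0 a * (b == j)%:R + w ord0 b * (D a b * (a == j)%:R)
  /\ derivable (fun u : rV => D a b * u ord0 a * u ord0 b) w (ebase j).
  move=> a b.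
  have [c1 c1d] := @derive_rcoord R n a w (ebase j).
  have [c2 c2d] := @derive_rcoord R n b w (ebase j).
  have [z1 z1d] := @deriveZr R rV (fun u : rV => u ord0 a) (D a b) w (ebase j) c1d.
  have [m1 m1d] := @deriveMf R rV (fun u : rV => D a b * u ord0 a) (fun u : rV => u ord0 b) w (ebase j) z1d c2d.
  split => //; rewrite m1 z1 c1 c2 !ebaseE //.
have T2 : forall a,
  'D_(ebase j : rV) (fun u : rV => \sum_b D a b * u ord0 a * u ord0 b) w
    = \sum_b (D a b * w ord0 a * (b == j)%:R + w ord0 b * (D a b * (a == j)%:R))
  /\ derivable (fun u : rV => \sum_b D a b * u ord0 a * u ord0 b) w (ebase j).
  move=> a.
  have [S S2] := @derive_sumf R rV n (fun b u => D a b * u ord0 a * u ord0 b) w (ebase j)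
     (fun b => (T1 a b).2).
  split => //; apply: (etrans S); apply: eq_bigr => b _; exact: (T1 a b).1.
have [S S2] := @derive_sumf R rV n (fun a u => \sum_b D a b * u ord0 a * u ord0 b) w (ebase j)
   (fun a => (T2 a).2).
split => //; apply: (etrans S); apply: eq_bigr => a _; exact: (T2 a).1.
Qed.

Lemma quad2 (D : 'I_n -> 'I_n -> R) i j (v : rV) :
  'D_(ebase i : rV) (fun w : rV =>
     \sum_a \sum_b (D a b * w ord0 a * (b == j)%:R + w ord0 b * (D a b * (a == j)%:R))) v
   = D i j + D j i /\ derivable (fun w : rV =>
     \sum_a \sum_b (D a b * w ord0 a * (b == j)%:R + w ord0 b * (D a b * (a == j)%:R))) v (ebase i).
Proof.
have T1 : forall a b,
  'D_(ebase i : rV) (fun w : rV => D a b * w ord0 a * (b == j)%:R + w ord0 b * (D a b * (a == j)%:R)) v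
    = (b == j)%:R * (D a b * (a == i)%:R) + (D a b * (a == j)%:R) * (b == i)%:R
  /\ derivable (fun w : rV => D a b * w ord0 a * (b == j)%:R + w ord0 b * (D a b * (a == j)%:R)) v (ebase i).
  move=> a b.
  have [c1 c1d] := @derive_rcoord R n a v (ebase i).
  have [c2 c2d] := @derive_rcoord R n b v (ebase i).
  have [k1 k1d] := @derive_cstf R rV ((b == j)%:R) v (ebase i).
  have [k2 k2d] := @derive_cstf R rV (D a b * (a == j)%:R) v (ebase i).
  have [z1 z1d] := @deriveZr R rV (fun u : rV => u ord0 a) (D a b) v (ebase i) c1d.
  have [m1 m1d] := @deriveMf R rV (fun u : rV => D a b * u ord0 a) (fun _ : rV => (b == j)%:R) v (ebase i) z1d k1d.
  have [m2 m2d] := @deriveMf R rV (fun u : rV => u ord0 b) (fun _ : rV => D a b * (a == j)%:R) v (ebase i) c2d k2d.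
  have [d1 d1d] := @deriveDf R rV _ _ v (ebase i) m1d m2d.
  split => //; rewrite d1 m1 m2 z1 c1 c2 k1 k2 !ebaseE; ring.
have T2 : forall a,
  'D_(ebase i : rV) (fun w : rV => \sum_b (D a b * w ord0 a * (b == j)%:R + w ord0 b * (D a b * (a == j)%:R))) v
    = D a j * (a == i)%:R + D a i * (a == j)%:R
  /\ derivable (fun w : rV => \sum_b (D a b * w ord0 a * (b == j)%:R + w ord0 b * (D a b * (a == j)%:R))) v (ebase i).
  move=> a.
  have [S S2] := @derive_sumf R rV n (fun b w => D a b * w ord0 a * (b == j)%:R + w ord0 b * (D a b * (a == j)%:R)) v (ebase i)
     (fun b => (T1 a b).2).
  split => //; apply: (etrans S).
  rewrite (eq_bigr _ (fun b _ => (T1 a b).1)) big_split /=.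
  by rewrite (sum_kron R n (fun b => D a b * (a == i)%:R) j) (sum_kron' R n (fun b => D a b * (a == j)%:R) i).
have [S S2] := @derive_sumf R rV n (fun a w => \sum_b (D a b * w ord0 a * (b == j)%:R + w ord0 b * (D a b * (a == j)%:R))) v (ebase i)
   (fun a => (T2 a).2).
split => //; apply: (etrans S).
rewrite (eq_bigr _ (fun a _ => (T2 a).1)) big_split /=.
by rewrite (sum_kron' R n (fun a => D a j) i) (sum_kron' R n (fun a => D a i) j).
Qed.

End Main5.
Section Alg.
Variables (R : realType) (n : nat).

Lemma main_alg (S T : 'I_n -> 'I_n -> R) (H : 'I_n -> R)
  (Ht Gt : 'I_n -> 'I_n -> 'I_n -> R) (D D' : 'I_n -> R) (g0 : R) k i j :
  g0 = -(1/2) * H k ->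
  (forall m a c, Gt m a c = -(1/2) * Ht m a c) ->
  (forall l, \sum_m S k m * T m l = (k == l)%:R) ->
  (forall m, \sum_c T c j * \sum_a T a i * Ht m a c = \sum_l T m l * H l + (D m + D' m)) ->
  (forall m, D' m = D m) ->
  g0 = \sum_m \sum_a \sum_c S k m * T a i * T c j * Gt m a c + \sum_m S k m * D m.
Proof.
move=> -> HG HST HEQ HD.
have E1 : forall m, \sum_a \sum_c S k m * T a i * T c j * Gt m a c
    = S k m * (-(1/2)) * (\sum_l T m l * H l + (D m + D' m)).
  move=> m; rewrite -HEQ exchange_big mulr_sumr; apply: eq_bigr => c _.
  rewrite mulr_sumr mulr_sumr; apply: eq_bigr => a _.
  by rewrite HG; ring.
rewrite (eq_bigr _ (fun m _ => E1 m)) -big_split /=.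
have E2 : forall m, S k m * (-(1/2)) * (\sum_l T m l * H l + (D m + D' m)) + S k m * D m
   = -(1/2) * \sum_l S k m * T m l * H l.
  move=> m; rewrite HD.
  have -> : \sum_l S k m * T m l * H l = S k m * \sum_l T m l * H l.
    by rewrite mulr_sumr; apply: eq_bigr => l _; rewrite mulrA.
  move: (\sum_l T m l * H l) (S k m) (D m) => X Y Z.
  by field.
rewrite (eq_bigr _ (fun m _ => E2 m)) -mulr_sumr exchange_big /=.
congr (_ * _).
under eq_bigr do rewrite -mulr_suml HST.
rewrite (bigD1 k) //= eqxx mul1r big1 ?addr0 // => l /negbTE.
by rewrite eq_sym => ->; rewrite mul0r.
Qed.

End Alg.
Theorem theorem4p1 (R : realType) (n : nat)
  (U V : set 'rV[R]_n) (psi phi : 'rV[R]_n -> 'rV[R]_n)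
  (Phi tPhi : 'rV[R]_n * 'rV[R]_n -> 'rV[R]_n) :
  open U -> open V ->
  (* psi : U -> V is a diffeomorphism (change of coordinates) with inverse phi *)
  (forall x, U x -> V (psi x)) -> (forall y, V y -> U (phi y)) ->
  (forall x, U x -> phi (psi x) = x) -> (forall y, V y -> psi (phi y) = y) ->
  smooth_on U psi -> smooth_on V phi ->
  (* the system in the old and in the new chart *)
  smooth_on (U `*` setT) Phi -> smooth_on (V `*` setT) tPhi ->
  (* transformation law of a Newtonian dynamical system *)
  (forall x v, U x -> forall i : 'I_n,
     tPhi (psi x, tvel psi x v) ord0 i =
       \sum_j jac psi x i j * Phi (x, v) ord0 j
       + \sum_j \sum_k djac psi i j k x * v ord0 j * v ord0 k) ->
  forall x v, U x -> forall k i j : 'I_n,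
    Gamma Phi k i j x v = Gamma Phi k j i x v /\
    Gamma Phi k i j x v =
      \sum_m \sum_a \sum_c
         jac phi (psi x) k m * jac psi x a i * jac psi x c j
         * Gamma tPhi m a c (psi x) (tvel psi x v)
      + \sum_m jac phi (psi x) k m * djac psi m i j x.
Proof.
move=> oU oV HUV HVU Hpp Hqq Hpsi Hphi HPhi HtPhi Htr x v Ux k i j.
split; first exact: (@Gamma_sym R n U Phi x v k i j oU HPhi Ux).
have Vx := HUV x Ux.
have dPhi : forall w, differentiable Phi (x, w).
  by move=> w; apply: (smooth0 _ _ _ _ _ _ HPhi).
have dPhi1 : forall w, differentiable
    ('D_((0 : 'rV[R]_n), (ebase j : 'rV[R]_n)) Phi) (x, w).
  by move=> w; apply: (smooth1 _ _ _ _ _ _ _ HPhi).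
have HEQ : forall m,
  \sum_c jac psi x c j * \sum_a jac psi x a i *
      'D_((0 : 'rV[R]_n), (ebase a : 'rV[R]_n))
        ('D_((0 : 'rV[R]_n), (ebase c : 'rV[R]_n)) tPhi) (psi x, tvel psi x v) ord0 m
  = \sum_l jac psi x m l *
      'D_((0 : 'rV[R]_n), (ebase i : 'rV[R]_n))
        ('D_((0 : 'rV[R]_n), (ebase j : 'rV[R]_n)) Phi) (x, v) ord0 l
    + (djac psi m i j x + djac psi m j i x).
  move=> m.
  apply: (etrans (esym (@LHS2 R n V psi tPhi x v m i j HtPhi Vx))).
  have Fm : (fun u => tPhi (psi x, tvel psi x u) ord0 m)
     = (fun u => \sum_l jac psi x m l * Phi (x, u) ord0 l
          + \sum_a \sum_b djac psi m a b x * u ord0 a * u ord0 b).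
    by apply/funext => u; exact: (Htr x u Ux m).
  rewrite Fm.
  have D1 : (fun w => 'D_(ebase j : 'rV[R]_n) (fun u => \sum_l jac psi x m l * Phi (x, u) ord0 l
          + \sum_a \sum_b djac psi m a b x * u ord0 a * u ord0 b) w)
     = (fun w => \sum_l jac psi x m l * 'D_((0 : 'rV[R]_n), (ebase j : 'rV[R]_n)) Phi (x, w) ord0 l
          + \sum_a \sum_b (djac psi m a b x * w ord0 a * (b == j)%:R
                           + w ord0 b * (djac psi m a b x * (a == j)%:R))).
    apply/funext => w.
    have [l1 l1d] := @linP R n Phi x w (jac psi x m) j (dPhi w).
    move: (@quad1 R n (fun a b => djac psi m a b x) j w) => /= [q1 q1d].
    have [d1 _] := @deriveDf R 'rV[R]_n _ _ w (ebase j) l1d q1d.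
    by apply: (etrans d1); rewrite l1 q1.
  rewrite D1.
  move: (@linP R n ('D_((0 : 'rV[R]_n), (ebase j : 'rV[R]_n)) Phi) x v (jac psi x m) i (dPhi1 v))
    => /= [l2 l2d].
  move: (@quad2 R n (fun a b => djac psi m a b x) i j v) => /= [q2 q2d].
  have [d2 _] := @deriveDf R 'rV[R]_n _ _ v (ebase i) l2d q2d.
  by apply: (etrans d2); rewrite l2 q2.
have G0 := @Gamma_eq R n U Phi x v k i j HPhi Ux.
have Gt : forall m a c, Gamma tPhi m a c (psi x) (tvel psi x v)
   = - (1 / 2) * 'D_((0 : 'rV[R]_n), (ebase a : 'rV[R]_n))
        ('D_((0 : 'rV[R]_n), (ebase c : 'rV[R]_n)) tPhi) (psi x, tvel psi x v) ord0 m.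
  by move=> m a c; exact: (@Gamma_eq R n V tPhi (psi x) (tvel psi x v) m a c HtPhi Vx).
have HST : forall l, \sum_m jac phi (psi x) k m * jac psi x m l = (k == l)%:R.
  by move=> l; exact: (@ST R n U V psi phi x k l oU HUV Hpp Hpsi Hphi Ux).
have Hsym : forall m, djac psi m j i x = djac psi m i j x.
  by move=> m; exact: (@djac_sym R n U psi x m j i oU Hpsi Ux).
exact: (@main_alg R n (jac phi (psi x)) (jac psi x)
  (fun l => 'D_((0 : 'rV[R]_n), (ebase i : 'rV[R]_n))
        ('D_((0 : 'rV[R]_n), (ebase j : 'rV[R]_n)) Phi) (x, v) ord0 l)
  (fun m a c => 'D_((0 : 'rV[R]_n), (ebase a : 'rV[R]_n))
        ('D_((0 : 'rV[R]_n), (ebase c : 'rV[R]_n)) tPhi) (psi x, tvel psi x v) ord0 m)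
  (fun m a c => Gamma tPhi m a c (psi x) (tvel psi x v))
  (fun m => djac psi m i j x) (fun m => djac psi m j i x)
  (Gamma Phi k i j x v) k i j G0 Gt HST HEQ Hsym).
Qed.
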